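(* Let $w>1$, $h_v(x)=\tanh(w\cdot x+v)$ and $g_v(x)=x-h_v(x)$ for $v\in\mathbb{R}$. Let $v_-,v_+$ be the unique reals such that $g_{v_-}$ vanishes at its local maximum point and $g_{v_+}$ vanishes at its local minimum point, and define the pivots $p_-=p_-^{v_-}$ and $p_+=p_+^{v_+}$. Then for every $v\in\mathbb{R}$, the function $h_v$ has one, two, or three fixpoints, all lying in $[-1,1]$, and: (1) if $h_v$ has exactly one fixpoint $x_1$, then $x_1\le p_-$ or $p_+\le x_1$; (2) if $h_v$ has exactly two fixpoints $x_1<x_3$, then $x_1\le p_-<p_+\le x_3$; (3) if $h_v$ has exactly three fixpoints $x_1<x_2<x_3$, then $x_1\le p_-<x_2<p_+\le x_3$.
   Context: For $w>1$, each $g_v$ has exactly two stationary points, the smaller one $p_-^v$ a local maximum and the larger one $p_+^v$ a local minimum; the values $v_-,v_+$ exist, are unique, and satisfy $v_+<v_-$. *)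

(* Defs.v *)
From Stdlib Require Import Reals.
Open Scope R_scope.

Definition h (w v x : R) : R := tanh (w * x + v).
Definition g (w v x : R) : R := x - h w v x.

Definition is_fix (w v x : R) : Prop := h w v x = x.

Definition local_max_pt (f : R -> R) (p : R) : Prop :=
  exists eps : R, 0 < eps /\ forall y, Rabs (y - p) < eps -> f y <= f p.
Definition local_min_pt (f : R -> R) (p : R) : Prop :=
  exists eps : R, 0 < eps /\ forall y, Rabs (y - p) < eps -> f p <= f y.

(* Main.v *)
Require Import Defs.
From Stdlib Require Import Reals Lra.
From Coquelicot Require Import Coquelicot.
Open Scope R_scope.

Lemma tanh_exp x : tanh x = 1 - 2 / (exp x * exp x + 1).
Proof.
  unfold tanh, sinh, cosh. rewrite exp_Ropp.
  assert (H := exp_pos x). field. split; nra.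
Qed.

Lemma tanh_bounds x : -1 < tanh x < 1.
Proof.
  rewrite tanh_exp. assert (H := exp_pos x).
  assert (0 < 2 / (exp x * exp x + 1)) by (apply Rdiv_lt_0_compat; nra).
  assert (2 / (exp x * exp x + 1) < 2).
  { apply (Rmult_lt_reg_r (exp x * exp x + 1)); [nra|].
    unfold Rdiv. rewrite Rmult_assoc, Rinv_l; nra. }
  lra.
Qed.

Lemma tanh_lt x y : x < y -> tanh x < tanh y.
Proof.
  intros H. rewrite !tanh_exp.
  assert (Hx := exp_pos x). assert (Hy := exp_pos y). assert (Hl := exp_increasing _ _ H).
  assert (2 / (exp y * exp y + 1) < 2 / (exp x * exp x + 1)); [|lra].
  unfold Rdiv. apply Rmult_lt_compat_l; [lra|]. apply Rinv_lt_contravar; nra.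
Qed.

Lemma tanh_le x y : x <= y -> tanh x <= tanh y.
Proof. intros [H|H]. left; now apply tanh_lt. right; now subst. Qed.

Lemma tanh_le_inv x y : tanh x <= tanh y -> x <= y.
Proof. intros H. destruct (Rle_or_lt x y) as [|Hl]; auto. apply tanh_lt in Hl. lra. Qed.

Lemma tanh_lt_inv x y : tanh x < tanh y -> x < y.
Proof. intros H. destruct (Rlt_or_le x y) as [|Hl]; auto. apply tanh_le in Hl. lra. Qed.

Lemma tanh_opp x : tanh (- x) = - tanh x.
Proof. unfold tanh, sinh, cosh. rewrite Ropp_involutive.
  assert (H := exp_pos x). assert (H' := exp_pos (-x)). field. lra. Qed.

Definition psi (w u : R) : R := u - w * tanh u.

Lemma psi_deriv w u : derivable_pt_lim (psi w) u (1 - w * (1 - tanh u ^ 2)).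
Proof.
  apply is_derive_Reals.
  apply (is_derive_ext (fun u => u - w * (1 - 2 / (exp u * exp u + 1)))).
  { intros t. unfold psi. now rewrite tanh_exp. }
  auto_derive.
  - assert (H := exp_pos u). nra.
  - rewrite tanh_exp. assert (H := exp_pos u). field. nra.
Qed.

Lemma psi_cont w : continuity (psi w).
Proof. apply derivable_continuous. intros u. exists (1 - w * (1 - tanh u ^ 2)). apply psi_deriv. Qed.

Lemma tanh0 : tanh 0 = 0.
Proof. unfold tanh, sinh. rewrite Ropp_0. unfold Rdiv. ring. Qed.

Lemma exists_a w : 1 < w -> exists a, 0 < a /\ w * (1 - tanh a ^ 2) = 1.
Proof.
  intros Hw. set (t := sqrt (1 - / w)).
  assert (Hiw : 0 < / w < 1). { split. apply Rinv_0_lt_compat; lra.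
    rewrite <- Rinv_1. apply Rinv_lt_contravar; lra. }
  assert (Ht2 : t * t = 1 - / w) by (apply sqrt_sqrt; lra).
  assert (Ht0 : 0 < t) by (apply sqrt_lt_R0; lra).
  assert (Ht1 : t < 1) by nra.
  set (q := (1 + t) / (1 - t)).
  assert (Hq : 1 < q). { unfold q. apply (Rmult_lt_reg_r (1 - t)); [lra|].
    unfold Rdiv. rewrite Rmult_assoc, Rinv_l; lra. }
  exists (ln q / 2). split.
  - assert (0 < ln q). { rewrite <- ln_1. apply ln_increasing; lra. } lra.
  - rewrite tanh_exp. rewrite <- exp_plus.
    replace (ln q / 2 + ln q / 2) with (ln q) by field.
    rewrite exp_ln by lra. unfold q.
    replace (1 - 2 / ((1 + t) / (1 - t) + 1)) with t by (field; lra).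
    simpl. rewrite Rmult_1_r, Ht2. field. lra.
Qed.

Lemma dpos w a u : 1 < w -> 0 < a -> w * (1 - tanh a ^ 2) = 1 ->
  (u < -a \/ a < u) -> 0 < 1 - w * (1 - tanh u ^ 2).
Proof.
  intros Hw Ha Hwa Hu.
  assert (Ht0 : 0 < tanh a) by (rewrite <- tanh0; apply tanh_lt; lra).
  assert (tanh a * tanh a < tanh u * tanh u).
  { destruct Hu as [Hu|Hu].
    - apply tanh_lt in Hu. rewrite tanh_opp in Hu. nra.
    - apply tanh_lt in Hu. nra. }
  simpl in *. nra.
Qed.

Lemma dneg w a u : 1 < w -> 0 < a -> w * (1 - tanh a ^ 2) = 1 ->
  -a < u < a -> 1 - w * (1 - tanh u ^ 2) < 0.
Proof.
  intros Hw Ha Hwa [Hu1 Hu2].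
  apply tanh_lt in Hu1. apply tanh_lt in Hu2. rewrite tanh_opp in Hu1.
  assert (Ht0 : 0 < tanh a) by (rewrite <- tanh0; apply tanh_lt; lra).
  assert (tanh u * tanh u < tanh a * tanh a) by nra.
  simpl in *. nra.
Qed.

Lemma psi_inc_L w a x y : 1 < w -> 0 < a -> w * (1 - tanh a ^ 2) = 1 ->
  x < y -> y <= -a -> psi w x < psi w y.
Proof.
  intros Hw Ha Hwa Hxy Hy.
  destruct (MVT_cor2 (psi w) (fun u => 1 - w * (1 - tanh u ^ 2)) x y Hxy)
    as [c [Hc1 Hc2]]. { intros; apply psi_deriv. }
  assert (0 < 1 - w * (1 - tanh c ^ 2)) by (apply (dpos w a); lra). nra.
Qed.

Lemma psi_inc_R w a x y : 1 < w -> 0 < a -> w * (1 - tanh a ^ 2) = 1 ->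
  a <= x -> x < y -> psi w x < psi w y.
Proof.
  intros Hw Ha Hwa Hx Hxy.
  destruct (MVT_cor2 (psi w) (fun u => 1 - w * (1 - tanh u ^ 2)) x y Hxy)
    as [c [Hc1 Hc2]]. { intros; apply psi_deriv. }
  assert (0 < 1 - w * (1 - tanh c ^ 2)) by (apply (dpos w a); lra). nra.
Qed.

Lemma psi_dec w a x y : 1 < w -> 0 < a -> w * (1 - tanh a ^ 2) = 1 ->
  -a <= x -> x < y -> y <= a -> psi w y < psi w x.
Proof.
  intros Hw Ha Hwa Hx Hxy Hy.
  destruct (MVT_cor2 (psi w) (fun u => 1 - w * (1 - tanh u ^ 2)) x y Hxy)
    as [c [Hc1 Hc2]]. { intros; apply psi_deriv. }
  assert (1 - w * (1 - tanh c ^ 2) < 0) by (apply (dneg w a); lra). nra.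
Qed.

Lemma nomax_R (f : R -> R) c d dl : 0 < dl -> c < d ->
  (forall z, Rabs (z - c) < dl -> f z <= f c) ->
  (forall x y, c <= x -> x < y -> y <= d -> f x < f y) -> False.
Proof.
  intros Hdl Hcd Hmax Hinc. set (m := Rmin (dl/2) (d - c)).
  assert (Hm1 : m <= dl/2) by apply Rmin_l. assert (Hm2 : m <= d - c) by apply Rmin_r.
  assert (Hm0 : 0 < m) by (apply Rmin_pos; lra).
  assert (H1 := Hmax (c + m)). assert (H2 := Hinc c (c + m)).
  rewrite Rabs_right in H1 by lra. specialize (H1 ltac:(lra)). specialize (H2 ltac:(lra) ltac:(lra) ltac:(lra)). lra.
Qed.

Lemma nomax_L (f : R -> R) c d dl : 0 < dl -> d < c ->
  (forall z, Rabs (z - c) < dl -> f z <= f c) ->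
  (forall x y, d <= x -> x < y -> y <= c -> f y < f x) -> False.
Proof.
  intros Hdl Hcd Hmax Hinc. set (m := Rmin (dl/2) (c - d)).
  assert (Hm1 : m <= dl/2) by apply Rmin_l. assert (Hm2 : m <= c - d) by apply Rmin_r.
  assert (Hm0 : 0 < m) by (apply Rmin_pos; lra).
  assert (H1 := Hmax (c - m)). assert (H2 := Hinc (c - m) c).
  rewrite Rabs_left in H1 by lra. specialize (H1 ltac:(lra)). specialize (H2 ltac:(lra) ltac:(lra) ltac:(lra)). lra.
Qed.

Lemma g_psi w v y : 1 < w -> g w v y = (psi w (w * y + v) - v) / w.
Proof. intros Hw. unfold g, h, psi. field. lra. Qed.

Lemma max_pt w a vm pm : 1 < w -> 0 < a -> w * (1 - tanh a ^ 2) = 1 ->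
  local_max_pt (g w vm) pm -> w * pm + vm = -a.
Proof.
  intros Hw Ha Hwa [eps [He Hloc]].
  set (c := w * pm + vm).
  assert (Hm : forall z, Rabs (z - c) < w * eps -> psi w z <= psi w c).
  { intros z Hz. assert (Hy := Hloc ((z - vm) / w)).
    rewrite !g_psi in Hy by lra.
    replace (w * ((z - vm) / w) + vm) with z in Hy by (field; lra).
    fold c in Hy.
    assert (Rabs ((z - vm) / w - pm) < eps).
    { replace ((z - vm) / w - pm) with ((z - c) / w) by (unfold c; field; lra).
      unfold Rdiv. rewrite Rabs_mult, Rabs_inv, (Rabs_right w) by lra.
      apply (Rmult_lt_reg_r w); [lra|]. rewrite Rmult_assoc, Rinv_l; lra. }
    specialize (Hy H). unfold Rdiv in Hy.
    apply Rmult_le_reg_r in Hy; [lra|]. apply Rinv_0_lt_compat; lra. }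
  assert (Hwe : 0 < w * eps) by nra.
  destruct (Rtotal_order c (-a)) as [Hc|[Hc|Hc]]; auto; exfalso.
  - apply (nomax_R (psi w) c (-a) (w*eps)); auto.
    intros; apply (psi_inc_L w a); lra.
  - destruct (Rle_or_lt c a) as [Hca|Hca].
    + apply (nomax_L (psi w) c (-a) (w*eps)); auto.
      intros; apply (psi_dec w a); lra.
    + apply (nomax_R (psi w) c (c+1) (w*eps)); auto. lra.
      intros; apply (psi_inc_R w a); lra.
Qed.

Lemma min_pt w a vp pp : 1 < w -> 0 < a -> w * (1 - tanh a ^ 2) = 1 ->
  local_min_pt (g w vp) pp -> w * pp + vp = a.
Proof.
  intros Hw Ha Hwa [eps [He Hloc]].
  set (c := w * pp + vp).
  assert (Hm : forall z, Rabs (z - c) < w * eps -> - psi w z <= - psi w c).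
  { intros z Hz. assert (Hy := Hloc ((z - vp) / w)).
    rewrite !g_psi in Hy by lra.
    replace (w * ((z - vp) / w) + vp) with z in Hy by (field; lra).
    fold c in Hy.
    assert (Rabs ((z - vp) / w - pp) < eps).
    { replace ((z - vp) / w - pp) with ((z - c) / w) by (unfold c; field; lra).
      unfold Rdiv. rewrite Rabs_mult, Rabs_inv, (Rabs_right w) by lra.
      apply (Rmult_lt_reg_r w); [lra|]. rewrite Rmult_assoc, Rinv_l; lra. }
    specialize (Hy H). unfold Rdiv in Hy.
    apply Rmult_le_reg_r in Hy; [lra|]. apply Rinv_0_lt_compat; lra. }
  assert (Hwe : 0 < w * eps) by nra.
  destruct (Rtotal_order c a) as [Hc|[Hc|Hc]]; auto; exfalso.
  - destruct (Rle_or_lt (-a) c) as [Hca|Hca].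
    + apply (nomax_R (fun z => - psi w z) c a (w*eps)); auto.
      intros x y ? ? ?; assert (psi w y < psi w x) by (apply (psi_dec w a); lra); lra.
    + apply (nomax_L (fun z => - psi w z) c (c-1) (w*eps)); auto. lra.
      intros x y ? ? ?; assert (psi w x < psi w y) by (apply (psi_inc_L w a); lra); lra.
  - apply (nomax_L (fun z => - psi w z) c a (w*eps)); auto.
    intros x y ? ? ?; assert (psi w x < psi w y) by (apply (psi_inc_R w a); lra); lra.
Qed.

Lemma fix_iff w v x : 1 < w -> (is_fix w v x <-> psi w (w * x + v) = v /\ x = tanh (w * x + v)).
Proof.
  intros Hw. unfold is_fix, h, psi. split.
  - intros H. rewrite H. split; [ring|auto].
  - intros [_ H]. auto.
Qed.

Lemma fix_of_u w v u : psi w u = v -> is_fix w v (tanh u) /\ w * tanh u + v = u.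
Proof.
  intros H. unfold psi in H. assert (E : w * tanh u + v = u) by lra.
  split; auto. unfold is_fix, h. now rewrite E.
Qed.

Lemma sol_zone w a v u : 1 < w -> 0 < a -> w * (1 - tanh a ^ 2) = 1 -> psi w u = v ->
  (u < -a /\ v < psi w (-a)) \/ u = -a \/ (-a < u < a /\ psi w a < v < psi w (-a))
  \/ u = a \/ (a < u /\ psi w a < v).
Proof.
  intros Hw Ha Hwa Hu. subst v.
  destruct (Rtotal_order u (-a)) as [H|[H|H]].
  - left. split; auto. apply (psi_inc_L w a); lra.
  - right; left; auto.
  - destruct (Rtotal_order u a) as [H'|[H'|H']].
    + right; right; left. split; [lra|]. split; apply (psi_dec w a); lra.
    + right; right; right; left; auto.
    + right; right; right; right. split; auto. apply (psi_inc_R w a); lra.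
Qed.

Lemma uniq_L w a u u' : 1 < w -> 0 < a -> w * (1 - tanh a ^ 2) = 1 ->
  u <= -a -> u' <= -a -> psi w u = psi w u' -> u = u'.
Proof.
  intros Hw Ha Hwa H1 H2 E. destruct (Rtotal_order u u') as [H|[H|H]]; auto.
  - assert (psi w u < psi w u') by (apply (psi_inc_L w a); lra). lra.
  - assert (psi w u' < psi w u) by (apply (psi_inc_L w a); lra). lra.
Qed.

Lemma uniq_M w a u u' : 1 < w -> 0 < a -> w * (1 - tanh a ^ 2) = 1 ->
  -a <= u <= a -> -a <= u' <= a -> psi w u = psi w u' -> u = u'.
Proof.
  intros Hw Ha Hwa H1 H2 E. destruct (Rtotal_order u u') as [H|[H|H]]; auto.
  - assert (psi w u' < psi w u) by (apply (psi_dec w a); lra). lra.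
  - assert (psi w u < psi w u') by (apply (psi_dec w a); lra). lra.
Qed.

Lemma uniq_R w a u u' : 1 < w -> 0 < a -> w * (1 - tanh a ^ 2) = 1 ->
  a <= u -> a <= u' -> psi w u = psi w u' -> u = u'.
Proof.
  intros Hw Ha Hwa H1 H2 E. destruct (Rtotal_order u u') as [H|[H|H]]; auto.
  - assert (psi w u < psi w u') by (apply (psi_inc_R w a); lra). lra.
  - assert (psi w u' < psi w u) by (apply (psi_inc_R w a); lra). lra.
Qed.

Lemma cont_shift w v : continuity (fun z => psi w z - v).
Proof. apply continuity_minus. apply psi_cont. apply continuity_const. intros x y; auto. Qed.

Lemma ex_L w a v : 1 < w -> 0 < a -> w * (1 - tanh a ^ 2) = 1 ->
  v < psi w (-a) -> exists u, u < -a /\ psi w u = v.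
Proof.
  intros Hw Ha Hwa Hv. set (L := Rmin (-a) (v - w) - 1).
  assert (HL1 : Rmin (-a) (v - w) <= -a) by apply Rmin_l.
  assert (HL2 : Rmin (-a) (v - w) <= v - w) by apply Rmin_r.
  assert (HpL : psi w L - v < 0).
  { unfold psi. assert (Ht := tanh_bounds L). assert (HL : L <= v - w - 1) by (unfold L; lra).
    assert (0 < w * (tanh L + 1)) by (apply Rmult_lt_0_compat; lra). nra. }
  destruct (IVT (fun z => psi w z - v) L (-a) (cont_shift w v) ltac:(unfold L; lra) HpL ltac:(lra))
    as [z [Hz1 Hz2]].
  exists z. split; [|lra]. destruct Hz1 as [_ [Hz|Hz]]; auto. subst z. lra.
Qed.

Lemma ex_R w a v : 1 < w -> 0 < a -> w * (1 - tanh a ^ 2) = 1 ->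
  psi w a < v -> exists u, a < u /\ psi w u = v.
Proof.
  intros Hw Ha Hwa Hv. set (U := Rmax a (v + w) + 1).
  assert (HL1 : a <= Rmax a (v + w)) by apply Rmax_l.
  assert (HL2 : v + w <= Rmax a (v + w)) by apply Rmax_r.
  assert (HpU : 0 < psi w U - v).
  { unfold psi. assert (Ht := tanh_bounds U). assert (HU : v + w + 1 <= U) by (unfold U; lra).
    assert (0 < w * (1 - tanh U)) by (apply Rmult_lt_0_compat; lra). nra. }
  destruct (IVT (fun z => psi w z - v) a U (cont_shift w v) ltac:(unfold U; lra) ltac:(lra) HpU)
    as [z [Hz1 Hz2]].
  exists z. split; [|lra]. destruct Hz1 as [[Hz|Hz] _]; auto. subst z. lra.
Qed.

Lemma ex_M w a v : 1 < w -> 0 < a -> w * (1 - tanh a ^ 2) = 1 ->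
  psi w a < v -> v < psi w (-a) -> exists u, -a < u < a /\ psi w u = v.
Proof.
  intros Hw Ha Hwa Hv1 Hv2.
  assert (Hc : continuity (fun z => v - psi w z)).
  { apply continuity_minus. apply continuity_const. intros x y; auto. apply psi_cont. }
  destruct (IVT (fun z => v - psi w z) (-a) a Hc ltac:(lra) ltac:(lra) ltac:(lra))
    as [z [Hz1 Hz2]].
  exists z. split; [|lra]. destruct Hz1 as [[Hz|Hz] [Hz'|Hz']].
  - lra.
  - rewrite Hz' in Hz2. lra.
  - rewrite <- Hz in Hz2. lra.
  - rewrite <- Hz in Hz2. lra.
Qed.

Ltac cl w a := first [ lra
  | (f_equal; lra)
  | (f_equal; apply (uniq_L w a); lra)
  | (f_equal; apply (uniq_M w a); lra)
  | (f_equal; apply (uniq_R w a); lra)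
  | (left; cl w a) | (right; cl w a) ].

Lemma count w a v : 1 < w -> 0 < a -> w * (1 - tanh a ^ 2) = 1 ->
    ((exists x1, forall x, is_fix w v x <-> x = x1) \/
     (exists x1 x3, x1 < x3 /\ forall x, is_fix w v x <-> (x = x1 \/ x = x3)) \/
     (exists x1 x2 x3, x1 < x2 /\ x2 < x3 /\
        forall x, is_fix w v x <-> (x = x1 \/ x = x2 \/ x = x3))).
Proof.
  intros Hw Ha Hwa.
  assert (Hmm : psi w a < psi w (-a)) by (apply (psi_dec w a); lra).
  destruct (Rtotal_order v (psi w (-a))) as [Hv1|[Hv1|Hv1]].
  - destruct (Rtotal_order v (psi w a)) as [Hv2|[Hv2|Hv2]].
    + destruct (ex_L w a v) as [u1 [Hu1a Hu1]]; auto.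
      left. exists (tanh u1). intros x; split.
      * intros Hf. apply fix_iff in Hf as [Hu Hx]; [|lra]. rewrite Hx.
        remember (w*x+v) as u eqn:Eu. clear Eu Hx.
        destruct (sol_zone w a v u) as [H|[->|[H|[->|H]]]]; auto; cl w a.
      * intros ->. apply fix_of_u; auto.
    + destruct (ex_L w a v) as [u1 [Hu1a Hu1]]; auto.
      right; left. exists (tanh u1), (tanh a). split; [apply tanh_lt; lra|].
      intros x; split.
      * intros Hf. apply fix_iff in Hf as [Hu Hx]; [|lra]. rewrite Hx.
        remember (w*x+v) as u eqn:Eu. clear Eu Hx.
        destruct (sol_zone w a v u) as [H|[->|[H|[->|H]]]]; auto; cl w a.
      * intros [->| ->]; apply fix_of_u; lra.
    + destruct (ex_L w a v) as [u1 [Hu1a Hu1]]; auto.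
      destruct (ex_M w a v) as [u2 [Hu2a Hu2]]; auto.
      destruct (ex_R w a v) as [u3 [Hu3a Hu3]]; auto.
      right; right. exists (tanh u1), (tanh u2), (tanh u3).
      split; [apply tanh_lt; lra|]. split; [apply tanh_lt; lra|].
      intros x; split.
      * intros Hf. apply fix_iff in Hf as [Hu Hx]; [|lra]. rewrite Hx.
        remember (w*x+v) as u eqn:Eu. clear Eu Hx.
        destruct (sol_zone w a v u) as [H|[->|[H|[->|H]]]]; auto; cl w a.
      * intros [->|[->| ->]]; apply fix_of_u; lra.
  - destruct (ex_R w a v) as [u3 [Hu3a Hu3]]; auto. lra.
    right; left. exists (tanh (-a)), (tanh u3). split; [apply tanh_lt; lra|].
    intros x; split.
    * intros Hf. apply fix_iff in Hf as [Hu Hx]; [|lra]. rewrite Hx.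
      remember (w*x+v) as u eqn:Eu. clear Eu Hx.
      destruct (sol_zone w a v u) as [H|[->|[H|[->|H]]]]; auto; cl w a.
    * intros [->| ->]; apply fix_of_u; lra.
  - destruct (ex_R w a v) as [u3 [Hu3a Hu3]]; auto. lra.
    left. exists (tanh u3). intros x; split.
    * intros Hf. apply fix_iff in Hf as [Hu Hx]; [|lra]. rewrite Hx.
      remember (w*x+v) as u eqn:Eu. clear Eu Hx.
      destruct (sol_zone w a v u) as [H|[->|[H|[->|H]]]]; auto; cl w a.
    * intros ->. apply fix_of_u; auto.
Qed.

Lemma fix_u w v x : 1 < w -> is_fix w v x -> exists u, psi w u = v /\ x = tanh u.
Proof. intros Hw Hf. apply fix_iff in Hf as [Hu Hx]; auto. eauto. Qed.

Lemma xz1 w a v x y : 1 < w -> 0 < a -> w * (1 - tanh a ^ 2) = 1 ->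
  is_fix w v x -> is_fix w v y -> x <= tanh (-a) -> y <= tanh (-a) -> x = y.
Proof.
  intros Hw Ha Hwa Hx Hy H1 H2.
  destruct (fix_u w v x Hw Hx) as [u [Hu ->]]. destruct (fix_u w v y Hw Hy) as [u' [Hu' ->]].
  apply tanh_le_inv in H1. apply tanh_le_inv in H2. f_equal. apply (uniq_L w a); lra.
Qed.

Lemma xz2 w a v x y : 1 < w -> 0 < a -> w * (1 - tanh a ^ 2) = 1 ->
  is_fix w v x -> is_fix w v y -> tanh (-a) <= x <= tanh a -> tanh (-a) <= y <= tanh a -> x = y.
Proof.
  intros Hw Ha Hwa Hx Hy [H1 H1'] [H2 H2'].
  destruct (fix_u w v x Hw Hx) as [u [Hu ->]]. destruct (fix_u w v y Hw Hy) as [u' [Hu' ->]].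
  apply tanh_le_inv in H1. apply tanh_le_inv in H2.
  apply tanh_le_inv in H1'. apply tanh_le_inv in H2'. f_equal. apply (uniq_M w a); lra.
Qed.

Lemma xz3 w a v x y : 1 < w -> 0 < a -> w * (1 - tanh a ^ 2) = 1 ->
  is_fix w v x -> is_fix w v y -> tanh a <= x -> tanh a <= y -> x = y.
Proof.
  intros Hw Ha Hwa Hx Hy H1 H2.
  destruct (fix_u w v x Hw Hx) as [u [Hu ->]]. destruct (fix_u w v y Hw Hy) as [u' [Hu' ->]].
  apply tanh_le_inv in H1. apply tanh_le_inv in H2. f_equal. apply (uniq_R w a); lra.
Qed.

Lemma xmid w a v x : 1 < w -> 0 < a -> w * (1 - tanh a ^ 2) = 1 ->
  is_fix w v x -> tanh (-a) < x < tanh a ->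
  exists y z, is_fix w v y /\ is_fix w v z /\ y < tanh (-a) /\ tanh a < z.
Proof.
  intros Hw Ha Hwa Hx [H1 H2].
  destruct (fix_u w v x Hw Hx) as [u [Hu ->]].
  apply tanh_lt_inv in H1. apply tanh_lt_inv in H2.
  assert (psi w u < psi w (-a)) by (apply (psi_dec w a); lra).
  assert (psi w a < psi w u) by (apply (psi_dec w a); lra).
  destruct (ex_L w a v) as [u1 [Hu1a Hu1]]; auto. lra.
  destruct (ex_R w a v) as [u3 [Hu3a Hu3]]; auto. lra.
  exists (tanh u1), (tanh u3). split; [apply fix_of_u; auto|]. split; [apply fix_of_u; auto|].
  split; apply tanh_lt; lra.
Qed.

Theorem proposition10 (w vm vp pm pp : R) (hw : 1 < w)
  (Hpm : local_max_pt (g w vm) pm) (Hgpm : g w vm pm = 0)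
  (Hpp : local_min_pt (g w vp) pp) (Hgpp : g w vp pp = 0) :
  forall v : R,
    (forall x, is_fix w v x -> -1 <= x <= 1) /\
    ((exists x1, forall x, is_fix w v x <-> x = x1) \/
     (exists x1 x3, x1 < x3 /\ forall x, is_fix w v x <-> (x = x1 \/ x = x3)) \/
     (exists x1 x2 x3, x1 < x2 /\ x2 < x3 /\
        forall x, is_fix w v x <-> (x = x1 \/ x = x2 \/ x = x3))) /\
    (forall x1, (forall x, is_fix w v x <-> x = x1) ->
        x1 <= pm \/ pp <= x1) /\
    (forall x1 x3, x1 < x3 ->
        (forall x, is_fix w v x <-> (x = x1 \/ x = x3)) ->
        x1 <= pm /\ pm < pp /\ pp <= x3) /\
    (forall x1 x2 x3, x1 < x2 -> x2 < x3 ->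
        (forall x, is_fix w v x <-> (x = x1 \/ x = x2 \/ x = x3)) ->
        x1 <= pm /\ pm < x2 /\ x2 < pp /\ pp <= x3).
Proof.
  destruct (exists_a w hw) as [a [Ha Hwa]].
  assert (Em : w * pm + vm = -a) by (apply (max_pt w a vm pm); auto).
  assert (Ep : w * pp + vp = a) by (apply (min_pt w a vp pp); auto).
  assert (Epm : pm = tanh (-a)).
  { unfold g, h in Hgpm. rewrite Em in Hgpm. lra. }
  assert (Epp : pp = tanh a).
  { unfold g, h in Hgpp. rewrite Ep in Hgpp. lra. }
  assert (Hpmpp : pm < pp) by (rewrite Epm, Epp; apply tanh_lt; lra).
  subst pm pp. clear Em Ep Hgpm Hgpp Hpm Hpp.
  intros v. split; [|split; [|split; [|split]]].
  - intros x Hx. destruct (fix_u w v x hw Hx) as [u [_ ->]].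
    assert (H := tanh_bounds u). lra.
  - apply (count w a v); auto.
  - intros x1 Hall.
    destruct (Rle_or_lt x1 (tanh (-a))) as [H|H]; [left; auto|].
    destruct (Rle_or_lt (tanh a) x1) as [H'|H']; [right; auto|].
    exfalso. assert (Hx1 : is_fix w v x1) by (apply Hall; auto).
    destruct (xmid w a v x1) as [y [z [Hy [Hz [Hy' Hz']]]]]; auto.
    apply Hall in Hy. lra.
  - intros x1 x3 H13 Hall.
    assert (Hf1 : is_fix w v x1) by (apply Hall; auto).
    assert (Hf3 : is_fix w v x3) by (apply Hall; auto).
    assert (Hout : forall x, is_fix w v x -> x <= tanh (-a) \/ tanh a <= x).
    { intros x Hx.
      destruct (Rle_or_lt x (tanh (-a))) as [H|H]; [left; auto|].
      destruct (Rle_or_lt (tanh a) x) as [H'|H']; [right; auto|].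
      exfalso. destruct (xmid w a v x) as [y [z [Hy [Hz [Hy' Hz']]]]]; auto.
      apply Hall in Hy. apply Hall in Hz. apply Hall in Hx.
      destruct Hy as [->| ->]; destruct Hz as [->| ->]; destruct Hx as [->| ->]; lra. }
    destruct (Hout x1 Hf1) as [A|A]; destruct (Hout x3 Hf3) as [B|B].
    + assert (x1 = x3) by (apply (xz1 w a v); auto). lra.
    + lra.
    + lra.
    + assert (x1 = x3) by (apply (xz3 w a v); auto). lra.
  - intros x1 x2 x3 H12 H23 Hall.
    assert (Hf1 : is_fix w v x1) by (apply Hall; auto).
    assert (Hf2 : is_fix w v x2) by (apply Hall; auto).
    assert (Hf3 : is_fix w v x3) by (apply Hall; auto).
    assert (Hz : forall x, x <= tanh (-a) \/ tanh (-a) < x < tanh a \/ tanh a <= x).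
    { intros x. destruct (Rle_or_lt x (tanh (-a))); [left; auto|].
      destruct (Rle_or_lt (tanh a) x); [right; right; auto|right; left; lra]. }
    destruct (Hz x1) as [A|[A|A]]; destruct (Hz x2) as [B|[B|B]]; destruct (Hz x3) as [C|[C|C]];
      try lra;
      try (assert (x1 = x2) by (first [apply (xz1 w a v); auto; lra | apply (xz2 w a v); auto; lra | apply (xz3 w a v); auto; lra]); lra);
      try (assert (x2 = x3) by (first [apply (xz1 w a v); auto; lra | apply (xz2 w a v); auto; lra | apply (xz3 w a v); auto; lra]); lra);
      try (assert (x1 = x3) by (first [apply (xz1 w a v); auto; lra | apply (xz2 w a v); auto; lra | apply (xz3 w a v); auto; lra]); lra).
Qed.
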